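(* The problems ISPNEW, ISOP and ISUP are pairwise equivalent: every instance of one can be formulated as an instance of another on the same graph so that an optimal solution of the new instance is an optimal solution of the original instance.
   Context: Let $G=(V,E)$ be a graph with vertex weights $c_i\in\mathbb{R}$ and edge weights $q^0_{ij},q^1_{ij}\in\mathbb{R}$. An independent set is a set $P\subseteq V$ containing no edge. For $P\subseteq V$ let $E_0(P)$ be the edges with no endpoint in $P$ and $E_1(P)$ the edges with exactly one endpoint in $P$. The independent set problem with node and edge weights (ISPNEW) is to find an independent set $P$ maximizing $\sum_{i\in P}c_i+\sum_{(i,j)\in E_0(P)}q^0_{ij}+\sum_{(i,j)\in E_1(P)}q^1_{ij}$. ISOP is the special case $q^1_{ij}=0$ for all edges; ISUP is the special case $q^0_{ij}=0$ for all edges. *)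

(* Defs.v *)
From HB Require Import structures.
From mathcomp Require Import all_boot all_order all_algebra.
Set Implicit Arguments. Unset Strict Implicit. Unset Printing Implicit Defensive.
Import Order.TTheory GRing.Theory Num.Theory.
Local Open Scope ring_scope.

Definition simple_graph (T : finType) (E : {set {set T}}) : Prop :=
  forall f, f \in E -> #|f| = 2%N.

(* An instance of ISPNEW on the graph: vertex weights c, edge weights q0, q1
   (edge weights are functions on edges, i.e. on 2-element vertex sets). *)
Record instance (R : realFieldType) (T : finType) := Instance {
  cw : T -> R;
  q0 : {set T} -> R;
  q1 : {set T} -> R }.

Definition independent (T : finType) (E : {set {set T}}) (P : {set T}) : bool :=
  [forall f in E, ~~ (f \subset P)].

Definition objective (R : realFieldType) (T : finType) (E : {set {set T}})
    (I : instance R T) (P : {set T}) : R :=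
  \sum_(i in P) cw I i
  + \sum_(f in E | #|f :&: P| == 0%N) q0 I f
  + \sum_(f in E | #|f :&: P| == 1%N) q1 I f.

Definition optimal (R : realFieldType) (T : finType) (E : {set {set T}})
    (I : instance R T) (P : {set T}) : Prop :=
  independent E P /\
  forall Q : {set T}, independent E Q -> objective E I Q <= objective E I P.

Inductive problem := ISPNEW | ISOP | ISUP.

Definition in_problem (R : realFieldType) (T : finType) (E : {set {set T}})
    (p : problem) (I : instance R T) : Prop :=
  match p with
  | ISPNEW => True
  | ISOP => forall f, f \in E -> q1 I f = 0
  | ISUP => forall f, f \in E -> q0 I f = 0
  end.

(* Main.v *)
Require Import Defs.
From HB Require Import structures.
From mathcomp Require Import lra.
From mathcomp Require Import all_boot all_order all_algebra.
Import Order.TTheory GRing.Theory Num.Theory.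
Local Open Scope ring_scope.

Theorem theorem8 (R : realFieldType) (T : finType) (E : {set {set T}})
    (HE : simple_graph E) (X Y : problem) (I : instance R T) :
  in_problem E X I ->
  exists J : instance R T,
    [/\ in_problem E Y J,
        (exists K : R, forall P : {set T}, independent E P ->
            objective E J P = objective E I P + K)
      & forall P : {set T}, optimal E J P -> optimal E I P].
Proof.
move=> _.
pose d f := q1 I f - q0 I f.
pose J := Instance (fun i => cw I i + \sum_(f in E | i \in f) d f)
                   (fun _ : {set T} => (0:R)) (fun _ : {set T} => (0:R)).
have key : forall P, independent E P ->
    objective E J P = objective E I P - \sum_(f in E) q0 I f.
  move=> P /forallP indP.
  rewrite /objective /= !big1_eq !addr0 big_split /=.
  have -> : \sum_(i in P) \sum_(f in E | i \in f) d f
          = \sum_(f in E) (d f *+ #|f :&: P|).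
    under eq_bigr do rewrite big_mkcondr /=.
    rewrite exchange_big /=; apply: eq_bigr => f fE.
    rewrite -sumr_const big_mkcond [RHS]big_mkcond /=.
    by apply: eq_bigr => i _; rewrite in_setI; case: (i \in P); case: (i \in f).
  rewrite -!addrA; congr (_ + _).
  rewrite [\sum_(f in E | _) q0 I f]big_mkcondr [\sum_(f in E | _) q1 I f]big_mkcondr /=.
  rewrite -sumrB -big_split /=; apply: eq_bigr => f fE.
  have := indP f; rewrite fE /= => nsub.
  have : (#|f :&: P| <= 1)%N.
    rewrite leqNgt; apply/negP => H2.
    have e : f :&: P = f.
      apply/eqP; rewrite eqEcard subsetIl HE //.
    by move: nsub; rewrite -e subsetIr.
  case: #|f :&: P| => [|[|]] //= _; rewrite /d.
    by rewrite mulr0n; lra.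
  by rewrite mulr1n; lra.
exists J; split.
- by case: Y.
- by exists (- \sum_(f in E) q0 I f) => P /key ->.
- move=> P [iP oP]; split=> // Q iQ.
  have := oP Q iQ; rewrite !key //; lra.
Qed.
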